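(* Let $(\Phi_i)_{i\in\mathbb{Z}}$ be a family of reduced indefinite binary quadratic forms over $\mathbb{Q}((1/T))$ of the same discriminant $D$, written $\Phi_i=((-1)^iA_i,\,B_i,\,(-1)^{i+1}A_{i+1})$, such that for every $i$ the form $\Phi_{i+1}$ is obtained from $\Phi_i$ by a transformation $\begin{pmatrix}0&1\\-1&\delta_i\end{pmatrix}$ with $\delta_i\in\mathbb{Q}[T]$. Let $Q$ be a binary quadratic form properly equivalent to $\Phi_0$. Then $$m(Q)=\inf_{i\in\mathbb{Z}}\deg A_i.$$
   Context: $\mathbb{Q}((1/T))$ is the field of formal Laurent series in $1/T$ over $\mathbb{Q}$; $\deg$ of a nonzero series is the exponent of its leading term, $\deg0=-\infty$. A binary quadratic form $(A,B,C)$ is $AX^2+BXY+CY^2$ with $A,B,C\in\mathbb{Q}((1/T))$ not all in $\mathbb{Q}(T)$, discriminant $D=B^2-4AC$; indefinite means $D\ne0$ is a square in $\mathbb{Q}((1/T))$; a square root $\sqrt D$ is fixed for the discriminant $D$. If $A\ne0$, first root $f=\frac{\sqrt D-B}{2A}$, second root $s=\frac{-\sqrt D-B}{2A}$. Reduced means $A\ne0$, $f\ne0$, $\deg f<0<\deg s$. A matrix $\begin{pmatrix}\alpha&\beta\\\gamma&\delta\end{pmatrix}$ over $\mathbb{Q}[T]$ transforms $q(x,y)$ into $q(\alpha X+\beta Y,\gamma X+\delta Y)$; two forms are properly equivalent if one is transformed into the other by such a matrix of determinant $1$. $m(Q)=\inf\{\deg Q(X,Y):X,Y\in\mathbb{Q}[T],\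 (X,Y)\ne(0,0)\}$. *)

(* Defs.v *)
(* The field Q((1/T)) of formal Laurent series in 1/T is
   modelled by coefficient functions  int -> rat  (coefficient of T^n)
   whose support is bounded above (predicate [isLS]). *)
From Stdlib Require Import ClassicalEpsilon.
From mathcomp Require Import all_boot all_order all_algebra.
From mathcomp Require Import all_classical all_reals.
Set Implicit Arguments. Unset Strict Implicit. Unset Printing Implicit Defensive.
Import Order.TTheory GRing.Theory Num.Theory.
Local Open Scope ring_scope.

Definition series := int -> rat.

Definition isLS (f : series) : Prop :=
  exists N : int, forall n : int, N < n -> f n = 0.

Definition s0 : series := fun _ => 0.
Definition sadd (f g : series) : series := fun n => f n + g n.
Definition sopp (f : series) : series := fun n => - f n.
Definition ssub (f g : series) : series := fun n => f n - g n.
Definition sscale (c : rat) (f : series) : series := fun n => c * f n.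

Definition lsb (f : series) : int :=
  epsilon (inhabits 0) (fun N : int => forall n : int, N < n -> f n = 0).

(* Cauchy product: (f g)_n = sum_k f_k g_(n-k), k ranging over the finite
   window  n - lsb g <= k <= lsb f  outside of which the terms vanish. *)
Definition smul (f g : series) : series := fun n =>
  let lo := n - lsb g in
  \sum_(j < absz (lsb f - lo + 1)) f (lo + j%:Z) * g (n - (lo + j%:Z)).

Definition polyS (p : {poly rat}) : series := fun n =>
  match n with Posz m => p`_m | Negz _ => 0 end.

Definition sone : series := polyS 1.

Definition sinv (f : series) : series :=
  epsilon (inhabits s0) (fun g => isLS g /\ smul f g = sone).
Definition sdiv (f g : series) : series := smul f (sinv g).

Definition deg (f : series) : \bar int :=
  epsilon (inhabits -oo%E) (fun d : \bar int =>
    (f = s0 /\ d = -oo%E) \/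
    exists n : int, d = n%:E /\ f n != 0 /\ forall k : int, n < k -> f k = 0).

Definition einf (S : set (\bar int)) : \bar int :=
  epsilon (inhabits -oo%E) (fun m : \bar int =>
    (forall x, S x -> (m <= x)%E) /\
    (forall m', (forall x, S x -> (m' <= x)%E) -> (m' <= m)%E)).

Definition inQT (f : series) : Prop :=
  exists p q : {poly rat}, q != 0 /\ smul (polyS q) f = polyS p.

(* binary quadratic form  A X^2 + B X Y + C Y^2 *)
Record bqf := BQF { qA : series; qB : series; qC : series }.

Definition is_bqf (q : bqf) : Prop :=
  [/\ isLS (qA q), isLS (qB q), isLS (qC q) &
      ~ (inQT (qA q) /\ inQT (qB q) /\ inQT (qC q))].

Definition disc (q : bqf) : series :=
  ssub (smul (qB q) (qB q)) (sscale 4 (smul (qA q) (qC q))).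

Definition indefinite (q : bqf) : Prop :=
  disc q <> s0 /\ exists r : series, isLS r /\ smul r r = disc q.

Definition first_root (sqD : series) (q : bqf) : series :=
  sdiv (ssub sqD (qB q)) (sscale 2 (qA q)).
Definition second_root (sqD : series) (q : bqf) : series :=
  sdiv (ssub (sopp sqD) (qB q)) (sscale 2 (qA q)).

Definition reduced (sqD : series) (q : bqf) : Prop :=
  [/\ qA q <> s0, first_root sqD q <> s0,
      (deg (first_root sqD q) < 0%:E)%E & (0%:E < deg (second_root sqD q))%E].

(* q(alpha X + beta Y, gamma X + delta Y) *)
Definition transform (a b c d : {poly rat}) (q : bqf) : bqf :=
  let al := polyS a in let be := polyS b in
  let ga := polyS c in let de := polyS d in
  let A := qA q in let B := qB q in let C := qC q in
  BQF (sadd (sadd (smul A (smul al al)) (smul B (smul al ga))) (smul C (smul ga ga)))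
      (sadd (sadd (sscale 2 (smul A (smul al be)))
                  (smul B (sadd (smul al de) (smul be ga))))
            (sscale 2 (smul C (smul ga de))))
      (sadd (sadd (smul A (smul be be)) (smul B (smul be de))) (smul C (smul de de))).

Definition properly_equiv (q1 q2 : bqf) : Prop :=
  (exists a b c d : {poly rat}, a * d - b * c = 1 /\ transform a b c d q1 = q2) \/
  (exists a b c d : {poly rat}, a * d - b * c = 1 /\ transform a b c d q2 = q1).

Definition evalq (q : bqf) (X Y : {poly rat}) : series :=
  sadd (sadd (smul (qA q) (polyS (X * X))) (smul (qB q) (polyS (X * Y))))
       (smul (qC q) (polyS (Y * Y))).

Definition mQ (q : bqf) : \bar int :=
  einf [set d | exists X Y : {poly rat}, (X, Y) != (0, 0) /\ d = deg (evalq q X Y)].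

Definition Phi (A B : int -> series) (i : int) : bqf :=
  BQF (sscale ((-1) ^ i) (A i)) (B i) (sscale ((-1) ^ (i + 1)) (A (i + 1))).

(* Main.v *)
Require Import Defs.
From HB Require Import structures.
From Stdlib Require Import ClassicalEpsilon.
From mathcomp Require Import all_boot all_order all_algebra.
From mathcomp Require Import all_classical all_reals.
From mathcomp Require Import zify ring lra.
Set Implicit Arguments. Unset Strict Implicit. Unset Printing Implicit Defensive.
Import Order.TTheory GRing.Theory Num.Theory.
Local Open Scope ring_scope.
Definition bnd (f : series) (N : int) := forall n : int, N < n -> f n = 0.

Lemma bnd_le f N M : bnd f N -> N <= M -> bnd f M.
Proof. by move=> h le n lt; apply: h; lia. Qed.

Lemma lsbP f : isLS f -> bnd f (lsb f).
Proof. move=> h; rewrite /lsb; exact: (epsilon_spec (inhabits 0) _ h). Qed.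

Lemma win_sum (F : int -> rat) (lo a : int) (len w : nat) : lo <= a ->
  (forall k, F k != 0 -> a <= k < a + w%:Z) -> a + w%:Z <= lo + len%:Z ->
  \sum_(j < len) F (lo + j%:Z) = \sum_(j < w) F (a + j%:Z).
Proof.
move=> hlo hs hhi.
pose d := absz (a - lo).
have hd : a = lo + d%:Z by rewrite /d; lia.
have [r hr] : exists r, len = (d + (w + r))%N by exists (len - (d + w))%N; lia.
subst len.
rewrite big_split_ord /= big1 ?add0r; last first.
  move=> j _; apply/eqP; apply: contraT => /hs; move: (ltn_ord j); rewrite /=; lia.
rewrite big_split_ord /= [X in _ + X]big1 ?addr0; last first.
  move=> j _; apply/eqP; apply: contraT => /hs; move: (ltn_ord j); rewrite /=; lia.
by apply: eq_bigr => j _; congr F; rewrite /=; lia.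
Qed.

Lemma win_eq (F : int -> rat) lo (len : nat) lo' (len' : nat) :
  (forall k, F k != 0 -> lo <= k < lo + len%:Z) ->
  (forall k, F k != 0 -> lo' <= k < lo' + len'%:Z) ->
  \sum_(j < len) F (lo + j%:Z) = \sum_(j < len') F (lo' + j%:Z).
Proof.
move=> h1 h2.
case: (pselect (exists k, F k != 0)) => [[k0 hk0]|hn]; last first.
  have z : forall k, F k = 0.
    by move=> k; apply/eqP; apply: contraT => hk; case: hn; exists k.
  by rewrite !big1 // => j _; rewrite z.
have := h1 _ hk0; have := h2 _ hk0 => /andP[a1 a2] /andP[b1 b2].
wlog le : lo len lo' len' h1 h2 a1 a2 b1 b2 / lo <= lo'.
  move=> W; case: (lerP lo lo') => h; first exact: W.
  by symmetry; apply: W => //; apply: ltW.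
pose e : int := Num.min (lo + len%:Z) (lo' + len'%:Z).
have -> : \sum_(j < len) F (lo + j%:Z) = \sum_(j < absz (e - lo')) F (lo' + j%:Z).
  apply: win_sum => //.
    move=> k hk; have := h1 _ hk; have := h2 _ hk.
    rewrite /e; case: (lerP (lo + len%:Z) (lo' + len'%:Z)) => hm; lia.
  rewrite /e; case: (lerP (lo + len%:Z) (lo' + len'%:Z)) => hm; lia.
symmetry; apply: win_sum => //.
  move=> k hk; have := h1 _ hk; have := h2 _ hk.
  rewrite /e; case: (lerP (lo + len%:Z) (lo' + len'%:Z)) => hm; lia.
rewrite /e; case: (lerP (lo + len%:Z) (lo' + len'%:Z)) => hm; lia.
Qed.

Lemma bnd_isLS f N : bnd f N -> isLS f.
Proof. by move=> h; exists N. Qed.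

Lemma smul_hi f g Nf Ng n : bnd f Nf -> bnd g Ng -> Nf + Ng < n -> smul f g n = 0.
Proof.
move=> hf hg hn; rewrite /smul big1 // => j _.
set k := (_ + _)%R.
case: (lerP k Nf) => hk; last by rewrite hf ?mul0r.
by rewrite hg ?mulr0 //; lia.
Qed.

Lemma bnd_smul f g Nf Ng : bnd f Nf -> bnd g Ng -> bnd (smul f g) (Nf + Ng).
Proof. by move=> hf hg n hn; apply: smul_hi hf hg hn. Qed.

Definition tp (f : series) (N : int) (K : nat) : {poly rat} := \poly_(i < K) f (N - i%:Z).

Lemma tp_coef f N K i : (i < K)%N -> (tp f N K)`_i = f (N - i%:Z).
Proof. by move=> h; rewrite /tp coef_poly h. Qed.

Lemma smul_coef f g Nf Ng K (m : nat) : bnd f Nf -> bnd g Ng -> (m < K)%N ->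
  smul f g (Nf + Ng - m%:Z) = (tp f Nf K * tp g Ng K)`_m.
Proof.
move=> hf hg hK.
have hLf := lsbP (bnd_isLS hf); have hLg := lsbP (bnd_isLS hg).
rewrite mulrC coefM.
set n := Nf + Ng - m%:Z.
pose F k := f k * g (n - k).
rewrite /smul.
transitivity (\sum_(j < m.+1) F (Nf - m%:Z + j%:Z)).
  apply: win_eq.
    move=> k; rewrite /F mulf_eq0 negb_or => /andP[h1 h2].
    have e1 : k <= lsb f by case: (lerP k (lsb f)) => // /hLf hz; move: h1; rewrite hz eqxx.
    have e2 : n - k <= lsb g by case: (lerP (n - k) (lsb g)) => // /hLg h; move: h2; rewrite h eqxx.
    lia.
  move=> k; rewrite /F mulf_eq0 negb_or => /andP[h1 h2].
  have e1 : k <= Nf by case: (lerP k Nf) => // /hf hz; move: h1; rewrite hz eqxx.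
  have e2 : n - k <= Ng by case: (lerP (n - k) Ng) => // /hg h; move: h2; rewrite h eqxx.
  rewrite /n in e2; lia.
apply: eq_bigr => j _; have hj := ltn_ord j.
rewrite !tp_coef; [|lia|lia].
rewrite /F mulrC; congr (_ * _); apply: congr1; rewrite /n; lia.
Qed.

Lemma coefM_eq (p q p' q' : {poly rat}) m :
  (forall i, (i <= m)%N -> p`_i = p'`_i) -> (forall i, (i <= m)%N -> q`_i = q'`_i) ->
  (p * q)`_m = (p' * q')`_m.
Proof.
move=> hp hq; rewrite !coefM; apply: eq_bigr => i _; have hi := ltn_ord i.
by rewrite hp ?hq //; lia.
Qed.

Lemma series_eq f g N : bnd f N -> bnd g N ->
  (forall m : nat, f (N - m%:Z) = g (N - m%:Z)) -> f = g.
Proof.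
move=> hf hg h; apply: funext => n.
case: (lerP n N) => hn; last by rewrite hf ?hg.
have -> : n = N - (absz (N - n))%:Z by lia.
exact: h.
Qed.

Lemma tp_smul f g Nf Ng K m : bnd f Nf -> bnd g Ng -> (m < K)%N ->
  (tp (smul f g) (Nf + Ng) K)`_m = (tp f Nf K * tp g Ng K)`_m.
Proof. by move=> hf hg hm; rewrite tp_coef // (smul_coef (K := K)). Qed.

Lemma smulA f g h Nf Ng Nh : bnd f Nf -> bnd g Ng -> bnd h Nh ->
  smul (smul f g) h = smul f (smul g h).
Proof.
move=> hf hg hh.
apply: (@series_eq _ _ (Nf + Ng + Nh)).
- exact: bnd_smul (bnd_smul hf hg) hh.
- by rewrite -[Nf + Ng + Nh]addrA; exact: bnd_smul hf (bnd_smul hg hh).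
move=> m.
rewrite (smul_coef (K := m.+1) (bnd_smul hf hg) hh) //.
rewrite -[Nf + Ng + Nh]addrA (smul_coef (K := m.+1) hf (bnd_smul hg hh)) //.
rewrite (@coefM_eq _ _ (tp f Nf m.+1 * tp g Ng m.+1) (tp h Nh m.+1)); first last.
- by [].
- by move=> i hi; rewrite tp_smul.
rewrite [RHS](@coefM_eq _ _ (tp f Nf m.+1) (tp g Ng m.+1 * tp h Nh m.+1)); first last.
- by move=> i hi; rewrite tp_smul.
- by [].
by rewrite mulrA.
Qed.

Lemma smulC f g Nf Ng : bnd f Nf -> bnd g Ng -> smul f g = smul g f.
Proof.
move=> hf hg; apply: (@series_eq _ _ (Nf + Ng)).
- exact: bnd_smul.
- by rewrite addrC; exact: bnd_smul.
move=> m; rewrite (smul_coef (K := m.+1) hf hg) // [Nf + Ng]addrC (smul_coef (K := m.+1) hg hf) //.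
by rewrite mulrC.
Qed.

Lemma bnd_sadd f g N : bnd f N -> bnd g N -> bnd (sadd f g) N.
Proof. by move=> hf hg n hn; rewrite /sadd hf ?hg ?addr0. Qed.

Lemma bnd_common f g Nf Ng : bnd f Nf -> bnd g Ng -> exists N, bnd f N /\ bnd g N.
Proof.
move=> hf hg; case: (lerP Nf Ng) => h.
  by exists Ng; split => //; apply: bnd_le hf h.
by exists Nf; split => //; apply: bnd_le hg (ltW h).
Qed.

Lemma smulDl f g h Nf Ng Nh : bnd f Nf -> bnd g Ng -> bnd h Nh ->
  smul (sadd f g) h = sadd (smul f h) (smul g h).
Proof.
move=> hf0 hg0 hh; have [N [hf hg]] := bnd_common hf0 hg0.
apply: (@series_eq _ _ (N + Nh)).
- exact: bnd_smul (bnd_sadd hf hg) hh.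
- exact: bnd_sadd (bnd_smul hf hh) (bnd_smul hg hh).
move=> m; rewrite /sadd.
rewrite !(smul_coef (K := m.+1) _ hh) //; last exact: bnd_sadd.
have -> : tp (sadd f g) N m.+1 = tp f N m.+1 + tp g N m.+1.
  by apply/polyP => i; rewrite coefD /tp !coef_poly; case: ifP => //; rewrite addr0.
by rewrite mulrDl coefD.
Qed.

Lemma bnd_polyS p : bnd (polyS p) (size p)%:Z.
Proof.
move=> [k|k] hk; last done.
by rewrite /polyS nth_default //; move: hk; rewrite ltz_nat => /ltnW.
Qed.

Lemma smul_mono c (k : nat) f Nf : bnd f Nf ->
  smul (polyS (c *: 'X^k)) f = fun n => c * f (n - k%:Z).
Proof.
move=> hf.
have hm : bnd (polyS (c *: 'X^k)) k%:Z.
  move=> [j|j] hj //=; rewrite coefZ coefXn; case: eqP => [e|]; [subst; lia|by rewrite mulr0].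
apply: (@series_eq _ _ (k%:Z + Nf)).
- exact: bnd_smul hm hf.
- by move=> n hn; rewrite hf ?mulr0 //; lia.
move=> m; rewrite (smul_coef (K := m.+1) hm hf) //.
have -> : tp (polyS (c *: 'X^k)) k m.+1 = c%:P.
  apply/polyP => i; rewrite coefC /tp coef_poly.
  case: ifP => hi; last by case: eqP => // e; subst; rewrite ltn0Sn in hi.
  case: (ltnP k i) => hki.
    have -> : (k%:Z - i%:Z) = Negz (i - k).-1 by rewrite NegzE; lia.
    by case: eqP => // e; subst.
  have -> : (k%:Z - i%:Z) = Posz (k - i) by lia.
  rewrite /= coefZ coefXn; case: (i =P 0%N) => [->|ne]; first by rewrite subn0 eqxx mulr1.
  have -> : (k - i == k)%N = false by apply/eqP; lia.
  by rewrite mulr0.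
rewrite coefCM; congr (c * _); rewrite tp_coef //; apply: congr1; lia.
Qed.

Lemma nz_ex f : f <> s0 -> exists k, f k != 0.
Proof.
move=> h; apply: contrapT => hn; apply: h; apply: funext => k.
by apply/eqP; apply: contrapT => hk; apply: hn; exists k; apply/negP.
Qed.

Lemma top_ex f N : bnd f N -> f <> s0 -> exists n, f n != 0 /\ bnd f n.
Proof.
move=> hf /nz_ex [k0 hk0].
have hk0N : k0 <= N by case: (lerP k0 N) => // /hf h; move: hk0; rewrite h eqxx.
pose P := fun j : nat => f (N - j%:Z) != 0.
have exP : exists j, P j by exists (absz (N - k0)); rewrite /P; have -> : N - (absz (N - k0))%:Z = k0 by lia.
case: (ex_minnP exP) => j hj hmin.
exists (N - j%:Z); split => // n hn.
case: (lerP n N) => hnN; last exact: hf.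
have e : n = N - (absz (N - n))%:Z by lia.
apply/eqP; apply: contraT => hne.
have := hmin (absz (N - n)); rewrite /P -e => /(_ hne); lia.
Qed.

Fixpoint bf (a : nat -> rat) (m : nat) : nat -> rat :=
  match m with
  | 0%N => fun _ => (a 0%N)^-1
  | m'.+1 => let b := bf a m' in
      fun k => if (k <= m')%N then b k
               else - (a 0%N)^-1 * \sum_(i < m'.+1) a i.+1 * b (m' - i)%N
  end.

Lemma bf_fix a m k : (k <= m)%N -> bf a m k = bf a k k.
Proof.
elim: m k => [|m IH] k hk; first by have -> : k = 0%N by lia.
rewrite /=; case: ifP => h; first by rewrite IH.
have e : k = m.+1 by lia.
by rewrite e /= ltnn.
Qed.

Lemma bf_rec a m : bf a m.+1 m.+1 = - (a 0%N)^-1 * \sum_(i < m.+1) a i.+1 * bf a (m - i)%N (m - i)%N.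
Proof.
rewrite /= ltnn; congr (_ * _); apply: eq_bigr => i _; rewrite bf_fix //; lia.
Qed.

Lemma inv_ex f : isLS f -> f <> s0 -> exists g, isLS g /\ smul f g = sone.
Proof.
move=> [N0 hN0] fnz.
have [N [hN hb]] := top_ex hN0 fnz.
pose a := fun i : nat => f (N - i%:Z).
pose b := fun k : nat => bf a k k.
pose g : series := fun n => if n <= - N then b (absz (- N - n)) else 0.
have hg : bnd g (- N) by move=> n hn; rewrite /g; case: ifP => // h; lia.
exists g; split; first by exists (- N).
have hs : bnd sone 0.
  move=> [k|k] hk //; rewrite /sone /polyS coef1; case: eqP => // e; subst; lia.
apply: (@series_eq _ _ (N + - N)); [exact: bnd_smul hb hg| by rewrite subrr|].
move=> m; rewrite (smul_coef (K := m.+1) hb hg) // subrr.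
have -> : sone (0 - m%:Z) = (m == 0%N)%:R.
  case: m => [|m]; first by rewrite subr0 /sone /= coef1.
  by have -> : (0 - m.+1%:Z) = Negz m by rewrite NegzE; lia.
rewrite coefM.
have tpa : forall i, (i <= m)%N -> (tp f N m.+1)`_i = a i by move=> i hi; rewrite tp_coef.
have tpb : forall i, (i <= m)%N -> (tp g (- N) m.+1)`_i = b i.
  move=> i hi; rewrite tp_coef //; rewrite /g ifT; last lia.
  by congr b; lia.
have ha0 : a 0%N != 0 by rewrite /a subr0.
case: m tpa tpb => [|m] tpa tpb.
  by rewrite big_ord1 tpa // tpb //= mulfV.
rewrite big_ord_recl tpa // tpb // subn0 /b bf_rec mulrA mulrN mulfV // mulN1r.
rewrite eqn0Ngt ltn0Sn /=.
rewrite addrC; apply/eqP; rewrite subr_eq0; apply/eqP.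
apply: eq_bigr => i _; have hi := ltn_ord i.
by rewrite tpa ?tpb //=; lia.
Qed.

Lemma isLS_s0 : isLS s0. Proof. by exists 0. Qed.
Lemma isLS_sadd f g : isLS f -> isLS g -> isLS (sadd f g).
Proof. move=> [N hf] [M hg]; have [K [h1 h2]] := bnd_common hf hg; exists K; exact: bnd_sadd. Qed.
Lemma isLS_sopp f : isLS f -> isLS (sopp f).
Proof. by move=> [N hf]; exists N => n hn; rewrite /sopp hf ?oppr0. Qed.
Lemma isLS_smul f g : isLS f -> isLS g -> isLS (smul f g).
Proof. move=> [N hf] [M hg]; exists (N + M); exact: bnd_smul. Qed.
Lemma isLS_polyS p : isLS (polyS p).
Proof. exists (size p)%:Z; exact: bnd_polyS. Qed.
Lemma isLS_sinv f : isLS f -> f <> s0 -> isLS (sinv f) /\ smul f (sinv f) = sone.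
Proof. move=> h1 h2; rewrite /sinv; exact: (epsilon_spec (inhabits s0) _ (inv_ex h1 h2)). Qed.

Record ls := Ls { lsv : series; lsP : `[< isLS lsv >] }.
HB.instance Definition _ := [isSub for lsv].
HB.instance Definition _ := [Choice of ls by <:].

Lemma lsL (x : ls) : isLS (lsv x). Proof. exact: asboolW (lsP x). Qed.

Lemma lsv_inj : injective lsv. Proof. exact: val_inj. Qed.

Definition ls_zero : ls := Ls (asboolT isLS_s0).
Definition ls_add (x y : ls) : ls := Ls (asboolT (isLS_sadd (lsL x) (lsL y))).
Definition ls_opp (x : ls) : ls := Ls (asboolT (isLS_sopp (lsL x))).
Definition ls_mul (x y : ls) : ls := Ls (asboolT (isLS_smul (lsL x) (lsL y))).
Definition ls_one : ls := Ls (asboolT (isLS_polyS 1)).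

Lemma ls_addA : associative ls_add.
Proof. by move=> x y z; apply: lsv_inj; apply: funext => n; rewrite /= /sadd addrA. Qed.
Lemma ls_addC : commutative ls_add.
Proof. by move=> x y; apply: lsv_inj; apply: funext => n; rewrite /= /sadd addrC. Qed.
Lemma ls_add0 : left_id ls_zero ls_add.
Proof. by move=> x; apply: lsv_inj; apply: funext => n; rewrite /= /sadd /s0 add0r. Qed.
Lemma ls_addN : left_inverse ls_zero ls_opp ls_add.
Proof. by move=> x; apply: lsv_inj; apply: funext => n; rewrite /= /sadd /sopp /s0 addNr. Qed.

HB.instance Definition _ := GRing.isZmodule.Build ls ls_addA ls_addC ls_add0 ls_addN.

Lemma ls_mulA : associative ls_mul.
Proof.
move=> x y z; apply: lsv_inj; rewrite /ls_mul /ls_add /=.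
have [Nx hx] := lsL x; have [Ny hy] := lsL y; have [Nz hz] := lsL z.
symmetry; exact: smulA hx hy hz.
Qed.
Lemma ls_mulC : commutative ls_mul.
Proof.
move=> x y; apply: lsv_inj; rewrite /ls_mul /ls_add /=.
have [Nx hx] := lsL x; have [Ny hy] := lsL y; exact: smulC hx hy.
Qed.
Lemma smul1 f : isLS f -> smul sone f = f.
Proof.
move=> [N hf]; have -> : sone = polyS (1 *: 'X^0) by rewrite scale1r expr0.
by rewrite (smul_mono _ _ hf); apply: funext => n; rewrite mul1r subr0.
Qed.
Lemma ls_mul1 : left_id ls_one ls_mul.
Proof. move=> x; apply: lsv_inj; rewrite /ls_mul /=; exact: smul1 (lsL x). Qed.
Lemma ls_mulDl : left_distributive ls_mul ls_add.
Proof.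
move=> x y z; apply: lsv_inj; rewrite /ls_mul /ls_add /=.
have [Nx hx] := lsL x; have [Ny hy] := lsL y; have [Nz hz] := lsL z.
exact: smulDl hx hy hz.
Qed.
Lemma ls_one_neq0 : ls_one != ls_zero.
Proof.
apply/eqP => /(congr1 lsv) /= /(congr1 (fun f => f 0)).
by rewrite /= coef1 /s0 /=; move/eqP; rewrite oner_eq0.
Qed.

HB.instance Definition _ := GRing.Zmodule_isComNzRing.Build ls ls_mulA ls_mulC ls_mul1 ls_mulDl ls_one_neq0.

Definition ls_inv (x : ls) : ls :=
  match pselect (lsv x <> s0) with
  | left H => Ls (asboolT (proj1 (isLS_sinv (lsL x) H)))
  | right _ => ls_zero
  end.

Lemma ls_mulV : forall x : ls, x != 0 -> ls_inv x * x = 1.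
Proof.
move=> x hx; rewrite /ls_inv; case: pselect => H.
  apply: lsv_inj => /=; have [_ e] := isLS_sinv (lsL x) H.
  have [N1 h1] := lsL x; have [N2 h2] := proj1 (isLS_sinv (lsL x) H).
  by rewrite (smulC h2 h1).
by case/eqP: hx; apply: lsv_inj; apply: contrapT.
Qed.
Lemma ls_inv0 : ls_inv 0 = 0.
Proof. by rewrite /ls_inv; case: pselect. Qed.

HB.instance Definition _ := GRing.ComNzRing_isField.Build ls ls_mulV ls_inv0.

Lemma lsvD (x y : ls) : lsv (x + y) = sadd (lsv x) (lsv y). Proof. by []. Qed.
Lemma lsvM (x y : ls) : lsv (x * y) = smul (lsv x) (lsv y). Proof. by []. Qed.
Lemma lsvN (x : ls) : lsv (- x) = sopp (lsv x). Proof. by []. Qed.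
Lemma lsvB (x y : ls) : lsv (x - y) = ssub (lsv x) (lsv y). Proof. by []. Qed.
Lemma lsv0 : lsv (0 : ls) = s0. Proof. by []. Qed.
Lemma lsv1 : lsv (1 : ls) = sone. Proof. by []. Qed.
Lemma lsvV (x : ls) : x != 0 -> lsv (x^-1) = sinv (lsv x).
Proof.
move=> hx; rewrite /GRing.inv /= /ls_inv; case: pselect => // H.
by case/eqP: hx; apply: lsv_inj; apply: contrapT.
Qed.
Lemma lsv_eq0 (x : ls) : (lsv x = s0) <-> x = 0.
Proof. by split => [h|->]; [apply: lsv_inj|]. Qed.

Definition polyK (p : {poly rat}) : ls := Ls (asboolT (isLS_polyS p)).

Lemma polyKB : zmod_morphism polyK.
Proof.
move=> p q; apply: lsv_inj; apply: funext => [[n|n]] //=; rewrite /sadd /sopp ?coefB //.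
Qed.

Lemma polyK1 : polyK 1 = 1. Proof. by []. Qed.

Lemma polyK_CM c p : polyK (c%:P * p) = polyK c%:P * polyK p.
Proof.
apply: lsv_inj; rewrite lsvM /=.
have -> : c%:P = c *: 'X^0 by rewrite expr0 alg_polyC.
rewrite (smul_mono _ _ (@bnd_polyS p)); apply: funext => n.
have -> : n - (0%N)%:Z = n by lia.
case: n => [n|n] /=; last by rewrite mulr0.
by rewrite expr0 alg_polyC coefCM.
Qed.

Lemma polyK_MX p : polyK (p * 'X) = polyK 'X * polyK p.
Proof.
apply: lsv_inj; rewrite lsvM /=.
have -> : ('X : {poly rat}) = 1 *: 'X^1 by rewrite expr1 scale1r.
rewrite (smul_mono _ _ (@bnd_polyS p)) scale1r expr1; apply: funext => [[n|n]] /=.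
  by rewrite coefMX; case: n => [|n] /=; rewrite ?mul1r ?subn1.
by rewrite mul1r.
Qed.

Lemma polyK0 : polyK 0 = 0.
Proof. by apply: lsv_inj; apply: funext => [[n|n]] //=; rewrite coef0. Qed.

Lemma polyKD p q : polyK (p + q) = polyK p + polyK q.
Proof.
by apply: lsv_inj; apply: funext => [[n|n]] //=; rewrite /sadd ?coefD // addr0.
Qed.

Lemma polyKM p q : polyK (p * q) = polyK p * polyK q.
Proof.
elim/poly_ind: p => [|p c IH]; first by rewrite mul0r polyK0 mul0r.
rewrite mulrDl polyKD polyK_CM -mulrA [('X * q)]mulrC mulrA polyK_MX IH.
by rewrite polyKD polyK_MX mulrDl; congr (_ + _); ring.
Qed.

HB.instance Definition _ := GRing.isZmodMorphism.Build _ _ polyK polyKB.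
HB.instance Definition _ := GRing.isMonoidMorphism.Build _ _ polyK (polyK1, polyKM).

Lemma polyK_inj0 p : polyK p = 0 -> p = 0.
Proof.
move=> /(congr1 lsv) h; apply/polyP => i; rewrite coef0.
by have := congr1 (fun f => f (Posz i)) h.
Qed.

Definition dg (f : series) : int := epsilon (inhabits 0) (fun n => f n != 0 /\ bnd f n).

Lemma dg_eq f n : f n != 0 -> bnd f n -> dg f = n.
Proof.
move=> h1 h2.
have [e1 e2] : f (dg f) != 0 /\ bnd f (dg f).
  rewrite /dg; apply: (epsilon_spec (inhabits 0) (fun n => f n != 0 /\ bnd f n)); by exists n.
case: (ltrgtP (dg f) n) => // h.
  by move: h1; rewrite e2 ?eqxx.
by move: e1; rewrite h2 ?eqxx.
Qed.

Definition dK (x : ls) : int := dg (lsv x).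

Lemma dKP (x : ls) : x != 0 -> lsv x (dK x) != 0 /\ bnd (lsv x) (dK x).
Proof.
move=> hx; have [N hN] := lsL x.
have hnz : lsv x <> s0 by move/lsv_eq0 => e; rewrite e eqxx in hx.
have [n [h1 h2]] := top_ex hN hnz.
by rewrite /dK (dg_eq h1 h2).
Qed.

Lemma dK_le (x : ls) n : x != 0 -> bnd (lsv x) n -> dK x <= n.
Proof.
move=> hx hb; have [h1 h2] := dKP hx.
case: (lerP (dK x) n) => // h; by move: h1; rewrite hb ?eqxx.
Qed.

Lemma dK_mul (x y : ls) : x != 0 -> y != 0 -> dK (x * y) = dK x + dK y.
Proof.
move=> hx hy; have [x1 x2] := dKP hx; have [y1 y2] := dKP hy.
apply: dg_eq; last exact: bnd_smul.
rewrite lsvM (_ : dK x + dK y = dK x + dK y - (0%N)%:Z); last lia.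
rewrite (smul_coef (K := 1) x2 y2) //.
rewrite coefM big_ord1 !tp_coef //= !subr0.
by rewrite mulf_neq0.
Qed.

Lemma dK_add (x y : ls) n : x + y != 0 -> (x != 0 -> dK x <= n) -> (y != 0 -> dK y <= n) ->
  dK (x + y) <= n.
Proof.
move=> hxy hx hy; apply: dK_le => // k hk; rewrite lsvD /sadd.
have -> : lsv x k = 0.
  case: (x =P 0) => [->|/eqP ne] //; have [_ b] := dKP ne; apply: b; have := hx ne; lia.
have -> : lsv y k = 0.
  case: (y =P 0) => [->|/eqP ne] //; have [_ b] := dKP ne; apply: b; have := hy ne; lia.
by rewrite addr0.
Qed.

Lemma dK_opp (x : ls) : dK (- x) = dK x.
Proof.
case: (x =P 0) => [->|/eqP ne]; first by rewrite oppr0.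
have [h1 h2] := dKP ne; apply: dg_eq; rewrite lsvN /sopp ?oppr_eq0 //.
by move=> k hk; rewrite h2 ?oppr0.
Qed.

Lemma dK_polyK p : p != 0 -> 0 <= dK (polyK p).
Proof.
move=> hp; have hn : polyK p != 0 by apply/eqP => /polyK_inj0 e; rewrite e eqxx in hp.
have [h1 _] := dKP hn; move: h1; case: (dK (polyK p)) => //.
Qed.

Lemma dK_const c : c != 0 -> dK (polyK c%:P) = 0.
Proof.
move=> hc; apply: dg_eq; first by rewrite /= coefC.
move=> [k|k] hk //=; rewrite coefC; case: eqP => // e; subst; lia.
Qed.

Lemma deg_dK (x : ls) : deg (lsv x) = if x == 0 then -oo%E else (dK x)%:E.
Proof.
pose P := fun d : \bar int => (lsv x = s0 /\ d = -oo%E) \/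
    exists n : int, d = n%:E /\ lsv x n != 0 /\ forall k : int, n < k -> lsv x k = 0.
have uniq : forall d, P d -> d = if x == 0 then -oo%E else (dK x)%:E.
  move=> d [[h ->]|[n [-> [h1 h2]]]].
    have -> : x = 0 by apply/lsv_eq0.
    by rewrite eqxx.
  have ne : x != 0 by apply/eqP => e; move: h1; rewrite e lsv0 /s0 eqxx.
  by rewrite (negbTE ne) /dK (dg_eq h1 h2).
apply: uniq; rewrite /deg; apply: epsilon_spec.
case: (x =P 0) => [->|/eqP ne]; first by exists -oo%E; left.
have [h1 h2] := dKP ne; exists (dK x)%:E; right; exists (dK x); split => //.
Qed.

Notation pK := polyK.

Lemma two_nz : (2 : ls) != 0.
Proof.
apply/eqP => h; have : pK 2%:R = 0 by rewrite rmorph_nat.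
move/polyK_inj0/eqP; rewrite -polyC_natr polyC_eq0 pnatr_eq0 //.
Qed.

Lemma four_nz : (4 : ls) != 0.
Proof.
apply/eqP => h; have : pK 4%:R = 0 by rewrite rmorph_nat.
move/polyK_inj0/eqP; rewrite -polyC_natr polyC_eq0 pnatr_eq0 //.
Qed.

Lemma dK1 : dK 1 = 0.
Proof. by rewrite -polyK1 -[1 : {poly rat}]/(1%:P) dK_const ?oner_eq0. Qed.

Lemma dK_inv (x : ls) : x != 0 -> dK x^-1 = - dK x.
Proof.
move=> hx; have := dK_mul hx (invr_neq0 hx); rewrite mulfV // dK1; lia.
Qed.

Lemma dK_lt_add (x y : ls) : x != 0 -> (y != 0 -> dK y < dK x) -> x + y != 0 /\ dK (x + y) = dK x.
Proof.
move=> hx hy.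
case: (y =P 0) => [->|/eqP ny]; first by rewrite addr0.
have hlt := hy ny.
have nxy : x + y != 0.
  apply/eqP => /eqP; rewrite addr_eq0 => /eqP ex.
  by move: hlt; rewrite ex dK_opp ltxx.
split => //.
have h1 : dK (x + y) <= dK x by apply: dK_add => // _; apply: ltW.
have e : x = (x + y) + (- y) by rewrite addrK.
case: (lerP (dK (x + y)) (dK y)) => h2.
  have := @dK_add (x + y) (- y) (dK y); rewrite -e => /(_ hx (fun _ => h2)).
  rewrite dK_opp lexx => /(_ (fun _ => isT)); lia.
have := @dK_add (x + y) (- y) (dK (x + y)); rewrite -e => /(_ hx (fun _ => lexx _)).
rewrite dK_opp (ltW h2) => /(_ (fun _ => isT)); lia.
Qed.

Definition isP (x : ls) := exists X, x = pK X.

Lemma isP_ge0 x : isP x -> x != 0 -> 0 <= dK x.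
Proof. by move=> [X ->] h; apply: dK_polyK; apply: contraNneq h => ->; rewrite polyK0. Qed.

Lemma isP_step (d : {poly rat}) x y : isP x -> isP y -> isP (pK d * y - x).
Proof. by move=> [X ->] [Y ->]; exists (d * Y - X); rewrite rmorphB rmorphM. Qed.

Definition fr (a b : int -> ls) (r : ls) i := (r - b i) / (2 * a i).
Definition sr (a b : int -> ls) (r : ls) i := (- r - b i) / (2 * a i).
Definition qv (a b c : int -> ls) i (x y : ls) := a i * (x * x) + b i * (x * y) + c i * (y * y).

Record chainH (a b c : int -> ls) (r : ls) (dl : int -> {poly rat}) : Prop := ChainH {
 cD : forall i, b i * b i - 4 * (a i * c i) = r * r;
 cA : forall i, a (i + 1) = c i;
 cB : forall i, b (i + 1) = - b i - 2 * (c i * pK (dl i));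
 cC : forall i, c (i + 1) = a i + b i * pK (dl i) + c i * (pK (dl i) * pK (dl i));
 ca : forall i, a i != 0;
 cf : forall i, fr a b r i != 0;
 cfd : forall i, dK (fr a b r i) < 0;
 cs : forall i, sr a b r i != 0;
 csd : forall i, 0 < dK (sr a b r i) }.

Section Core.
Variables (a b c : int -> ls) (r : ls) (dl : int -> {poly rat}).
Hypothesis H : chainH a b c r dl.

Let f := fr a b r.
Let s := sr a b r.
Let L i x y := x - f i * y.
Let N i x y := x - s i * y.
Let v := qv a b c.

Lemma c_nz i : c i != 0.
Proof. by rewrite -(cA H) (ca H). Qed.

Lemma c_eq i : c i = (b i * b i - r * r) / (4 * a i).
Proof.
have := cD H i => e.
have ha := ca H i; have h4 := four_nz.
apply: (mulIf (mulf_neq0 h4 ha)); rewrite mulfVK ?mulf_neq0 // -e; ring.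
Qed.

Lemma rb_nz i : r - b i != 0.
Proof. have := cf H i; rewrite /fr mulf_eq0 negb_or => /andP[] //. Qed.

Lemma rb_nz' i : - r - b i != 0.
Proof. have := cs H i; rewrite /sr mulf_eq0 negb_or => /andP[] //. Qed.

Lemma bbrr_nz i : b i * b i - r * r != 0.
Proof.
have := c_nz i; rewrite c_eq mulf_eq0 negb_or => /andP[] //.
Qed.

Lemma fact i x y : v i x y = a i * L i x y * N i x y.
Proof.
rewrite /v /qv /L /N /f /s /fr /sr c_eq.
have ha := ca H i; have h2 := two_nz; have h4 := four_nz.
by field; rewrite ha h2 h4.
Qed.

Lemma afs i : a i * f i * s i = c i.
Proof.
rewrite /f /s /fr /sr c_eq.
have ha := ca H i; have h2 := two_nz; have h4 := four_nz.
by field; rewrite ha h2 h4.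
Qed.

Lemma f_next i : f (i + 1) = pK (dl i) - (f i)^-1.
Proof.
rewrite /f /fr (cA H) (cB H) c_eq.
have ha := ca H i; have h2 := two_nz; have h4 := four_nz.
have h5 := rb_nz i; have h6 := bbrr_nz i.
by field; rewrite ha h2 h4 h5 h6.
Qed.

Lemma s_next i : s (i + 1) = pK (dl i) - (s i)^-1.
Proof.
rewrite /s /sr (cA H) (cB H) c_eq.
have ha := ca H i; have h2 := two_nz; have h4 := four_nz.
have h5 := rb_nz' i; have h6 := bbrr_nz i.
by field; rewrite ha h2 h4 h5 h6.
Qed.

Lemma L_back i x y : L i y (pK (dl i) * y - x) = f i * L (i + 1) x y.
Proof.
rewrite /L f_next; have hf := cf H i; rewrite -/(f i) in hf.
by field.
Qed.

Lemma N_back i x y : N i y (pK (dl i) * y - x) = s i * N (i + 1) x y.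
Proof.
rewrite /N s_next; have hf := cs H i; rewrite -/(s i) in hf.
by field.
Qed.

Lemma L_fwd i x y : L i x y = f i * L (i + 1) (pK (dl i) * x - y) x.
Proof. by rewrite -L_back; congr L; ring. Qed.

Lemma N_fwd i x y : N i x y = s i * N (i + 1) (pK (dl i) * x - y) x.
Proof. by rewrite -N_back; congr N; ring. Qed.

Lemma v_back i x y : v (i + 1) x y = v i y (pK (dl i) * y - x).
Proof. by rewrite /v /qv (cA H) (cB H) (cC H); ring. Qed.

Lemma v_fwd i x y : v i x y = v (i + 1) (pK (dl i) * x - y) x.
Proof. by rewrite v_back; congr (v i); ring. Qed.

Lemma sf_nz i : s i - f i != 0 /\ dK (s i - f i) = dK (s i).
Proof.
apply: dK_lt_add; first exact: (cs H).
move=> _; rewrite dK_opp; have := cfd H i; have := csd H i; rewrite -/(f i) -/(s i); lia.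
Qed.

Lemma dKf_le i : dK (f i) <= -1.
Proof. have := cfd H i; rewrite -/(f i); lia. Qed.
Lemma dKs_ge i : 1 <= dK (s i).
Proof. have := csd H i; rewrite -/(s i); lia. Qed.

Lemma pair_step d x y : (x != 0) || (y != 0) -> (pK d * x - y != 0) || (x != 0).
Proof.
case: (x =P 0) => [->|/eqP nx _]; last by apply/orP; right.
by move=> /= h; rewrite mulr0 sub0r oppr_eq0 h.
Qed.

Lemma pair_back d x y : (x != 0) || (y != 0) -> (y != 0) || (pK d * y - x != 0).
Proof.
case: (y =P 0) => [->|/eqP ny _]; last by apply/orP; left.
by rewrite orbF => h; rewrite mulr0 sub0r oppr_eq0 h orbT.
Qed.

Lemma Lnz_aux (n : nat) : forall i x y, isP x -> isP y -> (x != 0) || (y != 0) ->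
  L i x y = 0 -> N i x y != 0 /\ dK (N i x y) <= n%:Z -> False.
Proof.
elim: n => [|n IH] i x y px py nz hL [hN hd].
  all: have ny : y != 0 by apply/eqP => ey; move: hL nz; rewrite ey /L mulr0 subr0 => ->; rewrite eqxx.
  all: have eN : N i x y = - ((s i - f i) * y) by move/eqP: hL; rewrite /L /N subr_eq0 => /eqP ->; ring.
  all: have [sf1 sf2] := sf_nz i.
  all: have hy := isP_ge0 py ny.
  all: have edN : dK (N i x y) = dK (s i) + dK y by rewrite eN dK_opp dK_mul // sf2.
  have := dKs_ge i; lia.
apply: (IH (i + 1) (pK (dl i) * x - y) x) => //.
- exact: isP_step.
- exact: pair_step.
- by move/eqP: hL; rewrite L_fwd mulf_eq0 (negbTE (cf H i)) /= => /eqP.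
have hN' := hN; rewrite N_fwd in hN'.
have [hs hN2] : s i != 0 /\ N (i + 1) (pK (dl i) * x - y) x != 0 by move: hN'; rewrite mulf_eq0 negb_or => /andP[].
split => //.
have := dK_mul hs hN2; rewrite -N_fwd => e.
have := dKs_ge i; lia.
Qed.

Lemma Lnz i x y : isP x -> isP y -> (x != 0) || (y != 0) -> L i x y != 0.
Proof.
move=> px py nz; apply/eqP => hL.
have ny : y != 0 by apply/eqP => ey; move: hL nz; rewrite ey /L mulr0 subr0 => ->; rewrite eqxx.
have eN : N i x y = - ((s i - f i) * y) by move/eqP: hL; rewrite /L /N subr_eq0 => /eqP ->; ring.
have [sf1 sf2] := sf_nz i.
have hN : N i x y != 0 by rewrite eN oppr_eq0 mulf_neq0.
apply: (@Lnz_aux (absz (dK (N i x y))) i x y) => //; split => //; lia.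
Qed.

Lemma Nnz_aux (n : nat) : forall i x y, isP x -> isP y -> (x != 0) || (y != 0) ->
  N i x y = 0 -> L i x y != 0 /\ dK (L i x y) <= n%:Z -> False.
Proof.
elim: n => [|n IH] i x y px py nz hN [hL hd].
  all: have ny : y != 0 by apply/eqP => ey; move: hN nz; rewrite ey /N mulr0 subr0 => ->; rewrite eqxx.
  all: have eL : L i x y = (s i - f i) * y by move/eqP: hN; rewrite /L /N subr_eq0 => /eqP ->; ring.
  all: have [sf1 sf2] := sf_nz i.
  all: have hy := isP_ge0 py ny.
  all: have edL : dK (L i x y) = dK (s i) + dK y by rewrite eL dK_mul // sf2.
  have := dKs_ge i; lia.
apply: (IH (i - 1) y (pK (dl (i - 1)) * y - x)) => //.
- exact: isP_step.
- exact: pair_back.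
- by rewrite N_back subrK hN mulr0.
have eL' : L (i - 1) y (pK (dl (i - 1)) * y - x) = f (i - 1) * L i x y by rewrite L_back subrK.
have hf : f (i - 1) != 0 by apply: (cf H).
split; first by rewrite eL' mulf_neq0.
rewrite eL' dK_mul //.
have := dKf_le (i - 1); lia.
Qed.

Lemma Nnz i x y : isP x -> isP y -> (x != 0) || (y != 0) -> N i x y != 0.
Proof.
move=> px py nz; apply/eqP => hN.
have hL := Lnz i px py nz.
apply: (@Nnz_aux (absz (dK (L i x y))) i x y) => //; split => //; lia.
Qed.

Lemma v_nz i x y : isP x -> isP y -> (x != 0) || (y != 0) -> v i x y != 0.
Proof.
move=> px py nz; rewrite fact mulf_neq0 ?mulf_neq0 ?(ca H) //.
  exact: Lnz. exact: Nnz.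
Qed.

Lemma done_case i x y : isP x -> isP y -> (x != 0) || (y != 0) ->
  dK (f i) <= dK (L i x y) < 0 -> dK (a (i + 1)) <= dK (v i x y).
Proof.
move=> px py nz /andP[h1 h2].
have hL := Lnz i px py nz; have hN := Nnz i px py nz.
have ny : y != 0.
  apply/eqP => ey; move: h2; rewrite /L ey mulr0 subr0 => h2.
  case: (x =P 0) => [ex|/eqP nx]; first by move: nz; rewrite ex ey eqxx.
  have := isP_ge0 px nx; lia.
have [sf1 sf2] := sf_nz i.
have eLN : L i x y - N i x y = (s i - f i) * y by rewrite /L /N; ring.
have hLN : L i x y - N i x y != 0 by rewrite eLN mulf_neq0.
have dLN : dK (L i x y - N i x y) = dK (s i) + dK y by rewrite eLN dK_mul // sf2.
have hy := isP_ge0 py ny.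
have eN : N i x y = - (L i x y - N i x y) + L i x y by ring.
have [_ dN] : - (L i x y - N i x y) + L i x y != 0 /\ dK (- (L i x y - N i x y) + L i x y) = dK (- (L i x y - N i x y)).
  apply: dK_lt_add; first by rewrite oppr_eq0.
  move=> _; rewrite dK_opp dLN; have := dKs_ge i; lia.
rewrite dK_opp dLN -eN in dN.
rewrite fact (cA H) -afs.
have hf := cf H i; have hs := cs H i; have ha := ca H i.
rewrite -/(f i) -/(s i) in hf hs *.
rewrite (dK_mul (mulf_neq0 ha hf) hs) (dK_mul ha hf).
rewrite (dK_mul (mulf_neq0 ha hL) hN) (dK_mul ha hL).
lia.
Qed.

Lemma lowerA (n : nat) : forall i x y, isP x -> isP y -> (x != 0) || (y != 0) ->
  0 <= dK (L i x y) <= n%:Z -> exists j, dK (a j) <= dK (v i x y).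
Proof.
elim: n => [|n IH] i x y px py nz hd.
all: pose x' := y; pose y' := pK (dl (i - 1)) * y - x.
all: have px' : isP x' by [].
all: have py' : isP y' by apply: isP_step.
all: have nz' : (x' != 0) || (y' != 0) by apply: pair_back.
all: have ev : v i x y = v (i - 1) x' y' by rewrite -v_back subrK.
all: have eL : L (i - 1) x' y' = f (i - 1) * L i x y by rewrite L_back subrK.
all: have hL := Lnz i px py nz.
all: have hf := cf H (i - 1); rewrite -/(f (i - 1)) in hf.
all: have dL : dK (L (i - 1) x' y') = dK (f (i - 1)) + dK (L i x y) by rewrite eL dK_mul.
all: have := dKf_le (i - 1) => hfl.
all: case: (ltrP (dK (L (i - 1) x' y')) 0) => hneg.
- exists (i - 1 + 1); rewrite ev; apply: done_case => //; apply/andP; split => //; lia.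
- lia.
- exists (i - 1 + 1); rewrite ev; apply: done_case => //; apply/andP; split => //; lia.
rewrite ev; apply: (IH (i - 1) x' y') => //; lia.
Qed.

Lemma lowerB (n : nat) : forall i x y, isP x -> isP y -> (x != 0) || (y != 0) ->
  dK (L i x y) < dK (f i) -> - dK (L i x y) <= n%:Z -> exists j, dK (a j) <= dK (v i x y).
Proof.
elim: n => [|n IH] i x y px py nz hd hn.
  have := dKf_le i; lia.
pose x' := pK (dl i) * x - y; pose y' := x.
have px' : isP x' by apply: isP_step.
have nz' : (x' != 0) || (y' != 0) by apply: pair_step.
have ev : v i x y = v (i + 1) x' y' by rewrite v_fwd.
have eL : L i x y = f i * L (i + 1) x' y' by rewrite L_fwd.
have hL := Lnz (i + 1) px' px nz'.
have hf := cf H i; rewrite -/(f i) in hf.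
have dL : dK (L i x y) = dK (f i) + dK (L (i + 1) x' y') by rewrite eL dK_mul.
case: (lerP (dK (f (i + 1))) (dK (L (i + 1) x' y'))) => hge.
  exists (i + 1 + 1); rewrite ev; apply: done_case => //; apply/andP; split => //; lia.
have := dKf_le i => hfl.
rewrite ev; apply: (IH (i + 1) x' y') => //; lia.
Qed.

Lemma lower i x y : isP x -> isP y -> (x != 0) || (y != 0) ->
  v i x y != 0 /\ exists j, dK (a j) <= dK (v i x y).
Proof.
move=> px py nz; split; first exact: v_nz.
have hL := Lnz i px py nz.
case: (lerP 0 (dK (L i x y))) => h0.
  apply: (@lowerA (absz (dK (L i x y))) i x y) => //; lia.
case: (lerP (dK (f i)) (dK (L i x y))) => h1.
  exists (i + 1); apply: done_case => //; apply/andP; split => //.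
apply: (@lowerB (absz (dK (L i x y))) i x y) => //; lia.
Qed.

End Core.

Definition toK (f : series) : ls :=
  match pselect (isLS f) with left H => Ls (asboolT H) | right _ => 0 end.

Lemma toKE f : isLS f -> lsv (toK f) = f.
Proof. by move=> h; rewrite /toK; case: pselect. Qed.

Lemma sscaleK c (x : ls) : sscale c (lsv x) = lsv (pK c%:P * x).
Proof.
have [N hN] := lsL x; rewrite lsvM /=.
have -> : c%:P = c *: 'X^0 by rewrite expr0 alg_polyC.
rewrite (smul_mono _ _ hN); apply: funext => n; rewrite /sscale; congr (_ * lsv x _); lia.
Qed.

Lemma isLS_scale_inv c f : c != 0 -> isLS (sscale c f) -> isLS f.
Proof.
move=> hc [N h]; exists N => n hn; have := h n hn; rewrite /sscale => /eqP.
by rewrite mulf_eq0 (negbTE hc) /= => /eqP.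
Qed.

Lemma evalqK (x y z : ls) X Y : evalq (BQF (lsv x) (lsv y) (lsv z)) X Y =
  lsv (x * pK (X * X) + y * pK (X * Y) + z * pK (Y * Y)).
Proof. by []. Qed.

Lemma pK2 : pK 2%:P = 2.
Proof. by rewrite polyC_natr rmorph_nat. Qed.

Lemma transformK (x y z : ls) (p1 p2 p3 p4 : {poly rat}) :
  transform p1 p2 p3 p4 (BQF (lsv x) (lsv y) (lsv z)) =
  BQF (lsv (x * (pK p1 * pK p1) + y * (pK p1 * pK p3) + z * (pK p3 * pK p3)))
      (lsv (2 * (x * (pK p1 * pK p2)) + y * (pK p1 * pK p4 + pK p2 * pK p3) + 2 * (z * (pK p3 * pK p4))))
      (lsv (x * (pK p2 * pK p2) + y * (pK p2 * pK p4) + z * (pK p4 * pK p4))).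
Proof.
rewrite /transform -pK2 !lsvD -!sscaleK !lsvM !lsvD !lsvM //.
Qed.

Section Ids.
Variables (R : comRingType) (p1 p2 p3 p4 X Y : R).
Lemma id1 : (p1 * p4 - p2 * p3) * X = p4 * (p1 * X + p2 * Y) - p2 * (p3 * X + p4 * Y). Proof. ring. Qed.
Lemma id2 : (p1 * p4 - p2 * p3) * Y = p1 * (p3 * X + p4 * Y) - p3 * (p1 * X + p2 * Y). Proof. ring. Qed.
Lemma id3 : (p1 * p4 - p2 * p3) * X = p1 * (p4 * X - p2 * Y) + p2 * (- p3 * X + p1 * Y). Proof. ring. Qed.
Lemma id4 : (p1 * p4 - p2 * p3) * Y = p3 * (p4 * X - p2 * Y) + p4 * (- p3 * X + p1 * Y). Proof. ring. Qed.
End Ids.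

Definition VS (q : bqf) : set (\bar int) := [set d | exists X Y : {poly rat}, (X, Y) != (0, 0) /\ d = deg (evalq q X Y)].

Lemma VS_transform (x y z : ls) (p1 p2 p3 p4 : {poly rat}) : p1 * p4 - p2 * p3 = 1 ->
  VS (transform p1 p2 p3 p4 (BQF (lsv x) (lsv y) (lsv z))) = VS (BQF (lsv x) (lsv y) (lsv z)).
Proof.
move=> det.
have key : forall X Y, evalq (transform p1 p2 p3 p4 (BQF (lsv x) (lsv y) (lsv z))) X Y =
    evalq (BQF (lsv x) (lsv y) (lsv z)) (p1 * X + p2 * Y) (p3 * X + p4 * Y).
  move=> X Y; rewrite transformK !evalqK; congr lsv.
  rewrite !rmorphM !rmorphD !rmorphM; ring.
apply/seteqP; split => d [X [Y [nz ->]]].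
  exists (p1 * X + p2 * Y), (p3 * X + p4 * Y); split; last by rewrite key.
  apply: contraNN nz; rewrite !xpair_eqE => /andP[/eqP h1 /eqP h2].
  have e1 : X = p4 * (p1 * X + p2 * Y) - p2 * (p3 * X + p4 * Y).
    by rewrite -[LHS]mul1r -det; apply: id1.
  have e2 : Y = p1 * (p3 * X + p4 * Y) - p3 * (p1 * X + p2 * Y).
    by rewrite -[LHS]mul1r -det; apply: id2.
  by apply/andP; split; apply/eqP; [rewrite e1 | rewrite e2]; rewrite h1 h2 !mulr0 subrr.
exists (p4 * X - p2 * Y), (- p3 * X + p1 * Y); split.
  apply: contraNN nz; rewrite !xpair_eqE => /andP[/eqP h1 /eqP h2].
  have e1 : X = p1 * (p4 * X - p2 * Y) + p2 * (- p3 * X + p1 * Y).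
    by rewrite -[LHS]mul1r -det; apply: id3.
  have e2 : Y = p3 * (p4 * X - p2 * Y) + p4 * (- p3 * X + p1 * Y).
    by rewrite -[LHS]mul1r -det; apply: id4.
  by apply/andP; split; apply/eqP; [rewrite e1 | rewrite e2]; rewrite h1 h2 !mulr0 addr0.
have e := key (p4 * X - p2 * Y) (- p3 * X + p1 * Y).
have e3 : p1 * (p4 * X - p2 * Y) + p2 * (- p3 * X + p1 * Y) = X by rewrite -id3 det mul1r.
have e4 : p3 * (p4 * X - p2 * Y) + p4 * (- p3 * X + p1 * Y) = Y by rewrite -id4 det mul1r.
rewrite e3 e4 in e.
exact: (congr1 deg (esym e)).
Qed.

Lemma int_ind2 (P : int -> Prop) : P 0 -> (forall i, P i <-> P (i + 1)) -> forall i, P i.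
Proof.
move=> h0 hs [n|n].
  elim: n => [|n IH] //; have := hs n; rewrite (_ : Posz n.+1 = n%:Z + 1); [tauto|lia].
elim: n => [|n IH].
  by have := hs (Negz 0); rewrite (_ : Negz 0 + 1 = 0) //; tauto.
have := hs (Negz n.+1); rewrite (_ : Negz n.+1 + 1 = Negz n); first tauto.
by rewrite !NegzE; lia.
Qed.

Lemma einf_eq (S T : set (\bar int)) :
  (forall m, (forall x, S x -> (m <= x)%E) <-> (forall x, T x -> (m <= x)%E)) -> einf S = einf T.
Proof.
move=> h; rewrite /einf; congr epsilon; apply: funext => m; apply: propext.
split => -[h1 h2]; split.
- by apply/h.
- by move=> m' hm'; apply: h2; apply/h.
- by apply/h.
- by move=> m' hm'; apply: h2; apply/h.
Qed.

Lemma pK4 : pK 4%:P = 4.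
Proof. by rewrite polyC_natr rmorph_nat. Qed.

Lemma discK (x y z : ls) : disc (BQF (lsv x) (lsv y) (lsv z)) = lsv (y * y - 4 * (x * z)).
Proof.
rewrite /disc /= (_ : smul (lsv x) (lsv z) = lsv (x * z)) // sscaleK pK4 //.
Qed.

Lemma frK (r x y z : ls) : x != 0 ->
  first_root (lsv r) (BQF (lsv x) (lsv y) (lsv z)) = lsv ((r - y) / (2 * x)).
Proof.
move=> hx; rewrite /first_root /sdiv /= sscaleK pK2 -lsvV ?mulf_neq0 ?two_nz //.
Qed.

Lemma srK (r x y z : ls) : x != 0 ->
  second_root (lsv r) (BQF (lsv x) (lsv y) (lsv z)) = lsv ((- r - y) / (2 * x)).
Proof.
move=> hx; rewrite /second_root /sdiv /= sscaleK pK2 -lsvV ?mulf_neq0 ?two_nz //.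
Qed.

Unset Implicit Arguments.

Theorem theorem8 (D sqD : series) (A B : int -> series)
  (delta : int -> {poly rat}) (Q : bqf) :
  isLS D -> D <> s0 -> isLS sqD -> smul sqD sqD = D ->
  (forall i : int, is_bqf (Phi A B i)) ->
  (forall i : int, indefinite (Phi A B i)) ->
  (forall i : int, disc (Phi A B i) = D) ->
  (forall i : int, reduced sqD (Phi A B i)) ->
  (forall i : int, transform 0 1 (-1) (delta i) (Phi A B i) = Phi A B (i + 1)) ->
  is_bqf Q -> properly_equiv Q (Phi A B 0) ->
  mQ Q = einf [set d | exists i : int, d = deg (A i)].
Proof.
move=> hD hD0 hsq hsqD hbqf hind hdisc hred htr hQ hpe.
have m1 : (-1 : rat) != 0 by rewrite oppr_eq0 oner_eq0.
have LSA : forall i, isLS (A i).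
  by move=> i; have [h _ _ _] := hbqf i; apply: isLS_scale_inv h; apply: expfz_neq0.
have LSB : forall i, isLS (B i) by move=> i; have [_ h _ _] := hbqf i.
pose eps (i : int) : rat := (-1) ^ i.
have epsnz : forall i, eps i != 0 by move=> i; apply: expfz_neq0.
pose a i := pK (eps i)%:P * toK (A i).
pose b i := toK (B i).
pose c i := pK (eps (i + 1))%:P * toK (A (i + 1)).
pose r := toK sqD.
have PhiK : forall i, Phi A B i = BQF (lsv (a i)) (lsv (b i)) (lsv (c i)).
  by move=> i; rewrite /Phi /a /b /c -!sscaleK !toKE.
have esq : sqD = lsv r by rewrite /r toKE.
have ca : forall i, a i != 0.
  move=> i; have [h _ _ _] := hred i; apply/eqP => e; apply: h; by rewrite PhiK e lsv0.
have H : chainH a b c r delta.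
  split.
  - move=> i; apply: lsv_inj; rewrite -discK -PhiK hdisc -hsqD esq //.
  - by [].
  - move=> i; have := htr i; rewrite !PhiK transformK => -[_ eB _].
    have -> : b (i + 1) = 2 * (a i * (pK 0 * pK 1)) + b i * (pK 0 * pK (delta i) + pK 1 * pK (-1)) +
        2 * (c i * (pK (-1) * pK (delta i))) by apply: lsv_inj; exact: (esym eB).
    rewrite rmorph0 rmorph1 rmorphN1; ring.
  - move=> i; have := htr i; rewrite !PhiK transformK => -[_ _ eC].
    have -> : c (i + 1) = a i * (pK 1 * pK 1) + b i * (pK 1 * pK (delta i)) +
        c i * (pK (delta i) * pK (delta i)) by apply: lsv_inj; exact: (esym eC).
    rewrite rmorph1; ring.
  - exact: ca.
  - move=> i; have [_ h _ _] := hred i; apply/eqP => e; apply: h.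
    by rewrite PhiK esq frK // -/(fr a b r i) e lsv0.
  - move=> i; have [_ h1 h _] := hred i; move: h h1; rewrite PhiK esq frK // -/(fr a b r i) deg_dK.
    case: eqP => [->|_]; first by rewrite lsv0.
    by rewrite lte_fin.
  - move=> i; have [_ _ _ h] := hred i; move: h; rewrite PhiK esq srK // -/(sr a b r i) deg_dK.
    by case: eqP.
  - move=> i; have [_ _ _ h] := hred i; move: h; rewrite PhiK esq srK // -/(sr a b r i) deg_dK.
    by case: eqP => // _; rewrite lte_fin.
have hV : forall i, VS (Phi A B (i + 1)) = VS (Phi A B i).
  move=> i; rewrite -(htr i) !PhiK VS_transform //.
  by rewrite mul0r mul1r sub0r opprK.
have VS_all : forall i, VS (Phi A B i) = VS (Phi A B 0).
  apply: int_ind2 => // i; rewrite hV; tauto.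
have QK : Q = BQF (lsv (toK (qA Q))) (lsv (toK (qB Q))) (lsv (toK (qC Q))).
  by case: hQ => h1 h2 h3 _; rewrite !toKE //; case: (Q).
have VSQ : VS Q = VS (Phi A B 0).
  case: hpe => [[p1 [p2 [p3 [p4 [det e]]]]]|[p1 [p2 [p3 [p4 [det e]]]]]].
    rewrite -e {1 2}QK VS_transform //.
  by rewrite -e PhiK VS_transform // -PhiK.
have degA : forall j, deg (A j) = (dK (a j))%:E.
  move=> j; rewrite -(toKE (LSA j)) deg_dK.
  have hA : toK (A j) != 0 by apply: contraNneq (ca j) => e; rewrite /a e mulr0.
  by rewrite (negbTE hA) /a dK_mul ?dK_const ?add0r // -/(eps j) ?polyC_eq0; apply/eqP => /polyK_inj0/eqP; rewrite polyC_eq0 (negbTE (epsnz j)).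
change (einf (VS Q) = einf [set d | exists i : int, d = deg (A i)]).
rewrite VSQ; apply: einf_eq => m; split => hm x hx.
  case: hx => i ->; rewrite degA; apply: hm; rewrite -(VS_all i).
  exists 1, 0; split; first by rewrite xpair_eqE oner_eq0.
  rewrite PhiK evalqK mulr1 !mulr0 rmorph1 !rmorph0 mulr1 !mulr0 !addr0 deg_dK.
  by rewrite (negbTE (ca i)).
case: hx => X [Y [nz ->]].
rewrite PhiK evalqK !rmorphM.
have nz' : (pK X != 0) || (pK Y != 0).
  move: nz; rewrite xpair_eqE negb_and => /orP[h|h]; apply/orP; [left|right];
  by apply: contraNneq h => /polyK_inj0 ->.
have pX : isP (pK X) by exists X.
have pY : isP (pK Y) by exists Y.
have [vnz [j hj]] := lower H 0 pX pY nz'.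
rewrite -/(qv a b c 0 (pK X) (pK Y)) deg_dK (negbTE vnz).
apply: le_trans (hm _ (ex_intro _ j erefl)) _.
by rewrite degA lee_fin.
Qed.
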